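(* For every $k\ge1$ there is a constant $c_k$ such that for every $n\ge1$ and every sentence $\varphi\in\mathrm{FO}^2_n[<]$ over a $k$-letter alphabet $\Sigma$: if $\varphi$ is satisfied by some word in $\Sigma^\star$, then $\varphi$ is satisfied by some word in $\Sigma^\star$ of length at most $c_k n^k$.
   Context: Words are finite structures with universe $\{1,\dots,|w|\}$, unary predicates $Q_a$ ($a\in\Sigma$) marking the positions carrying letter $a$, and the order $<$. $\mathrm{FO}^2_n[<]$ is first-order logic over this signature using only the two variables $x,y$ (which may be requantified), with quantifier depth at most $n$. *)

(* Defs.v *)
From mathcomp Require Import all_boot.
Set Implicit Arguments. Unset Strict Implicit. Unset Printing Implicit Defensive.

Inductive var := VX | VY.

Definition var_eqb (u v : var) : bool :=
  match u, v with VX, VX | VY, VY => true | _, _ => false end.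

Inductive fo2 (k : nat) : Type :=
| FTrue : fo2 k
| FLetter : 'I_k -> var -> fo2 k
| FLt : var -> var -> fo2 k
| FEq : var -> var -> fo2 k
| FNot : fo2 k -> fo2 k
| FAnd : fo2 k -> fo2 k -> fo2 k
| FOr : fo2 k -> fo2 k -> fo2 k
| FEx : var -> fo2 k -> fo2 k
| FAll : var -> fo2 k -> fo2 k.

Fixpoint qdepth k (f : fo2 k) : nat :=
  match f with
  | FTrue | FLetter _ _ | FLt _ _ | FEq _ _ => 0
  | FNot g => qdepth g
  | FAnd g h | FOr g h => maxn (qdepth g) (qdepth h)
  | FEx _ g | FAll _ g => (qdepth g).+1
  end.

Fixpoint free k (v : var) (f : fo2 k) : bool :=
  match f with
  | FTrue => false
  | FLetter _ u => var_eqb u v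
  | FLt u u' | FEq u u' => var_eqb u v || var_eqb u' v
  | FNot g => free v g
  | FAnd g h | FOr g h => free v g || free v h
  | FEx u g | FAll u g => ~~ var_eqb u v && free v g
  end.

Definition sentence k (f : fo2 k) : Prop := ~~ free VX f /\ ~~ free VY f.

Definition upd (s : var -> nat) (v : var) (i : nat) : var -> nat :=
  fun u => if var_eqb u v then i else s u.

(* Semantics on a word w; positions are 0, ..., size w - 1 (order-isomorphic
   to 1, ..., |w|); the letter at position i is nth i w. *)
Fixpoint holds k (w : seq 'I_k) (s : var -> nat) (f : fo2 k) : Prop :=
  match f with
  | FTrue => True
  | FLetter a v => nth None (map Some w) (s v) = Some a
  | FLt u v => s u < s v
  | FEq u v => s u = s v
  | FNot g => ~ holds w s g
  | FAnd g h => holds w s g /\ holds w s h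
  | FOr g h => holds w s g \/ holds w s h
  | FEx v g => exists i, i < size w /\ holds w (upd s v i) g
  | FAll v g => forall i, i < size w -> holds w (upd s v i) g
  end.

(* A word satisfies a sentence (the initial assignment is irrelevant for
   sentences, since every variable occurrence is bound). *)
Definition models k (w : seq 'I_k) (f : fo2 k) : Prop := holds w (fun _ => 0) f.

(* Main.v *)
Require Import Defs.
From mathcomp Require Import all_boot zify.
Set Implicit Arguments. Unset Strict Implicit. Unset Printing Implicit Defensive.

Section G.
Variable k : nat.
Implicit Types (W : seq 'I_k) (s : var -> nat) (P : var -> bool).

Definition letter W p := nth None (map Some W) p.
Definition ordm (a b a' b' : nat) : bool := ((a < b) == (a' < b')) && ((a == b) == (a' == b')).
Definition addv P v : var -> bool := fun u => var_eqb u v || P u.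
Definition none : var -> bool := fun _ => false.
Definition s0 : var -> nat := fun _ => 0.

Definition atomic W W' s s' P : Prop :=
 (forall u, P u -> s u < size W /\ s' u < size W' /\ letter W (s u) = letter W' (s' u)) /\
 (forall u v, P u -> P v -> ordm (s u) (s v) (s' u) (s' v)).

Fixpoint geq r W W' s s' P : Prop :=
 atomic W W' s s' P /\
 match r with 0 => True | r'.+1 =>
  forall v, (forall i, i < size W -> exists i', i' < size W' /\ geq r' W W' (upd s v i) (upd s' v i') (addv P v)) /\
            (forall i', i' < size W' -> exists i, i < size W /\ geq r' W W' (upd s v i) (upd s' v i') (addv P v)) end.

Lemma geq_at r W W' s s' P : geq r W W' s s' P -> atomic W W' s s' P.
Proof. by case: r => [[]|r []]. Qed.

Lemma var_eqb_refl u : var_eqb u u. Proof. by case: u. Qed.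

Lemma var_eqb_sym u v : var_eqb u v = var_eqb v u. Proof. by case: u; case: v. Qed.

Lemma ordm_refl a a' : ordm a a a' a'.
Proof. by rewrite /ordm !ltnn !eqxx. Qed.

Lemma ordm_sym a b a' b' : ordm a b a' b' -> ordm b a b' a'.
Proof.
rewrite /ordm => /andP[/eqP H1 /eqP H2]; apply/andP; split; apply/eqP.
- case: (ltngtP a b) H1 H2; case: (ltngtP a' b') => //.
- by rewrite eq_sym H2 eq_sym.
Qed.

Lemma soundness (f : fo2 k) : forall r W W' s s' P,
  qdepth f <= r -> (forall u, free u f -> P u) -> geq r W W' s s' P ->
  (holds W s f <-> holds W' s' f).
Proof.
elim: f => [|a v|u v|u v|g IH|g IHg h IHh|g IHg h IHh|v g IH|v g IH] r W W' s s' P /= Hd Hf Hg;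
  have Ha := geq_at Hg.
- by [].
- have [_ [_ E]] := Ha.1 v (Hf v (var_eqb_refl v)). rewrite /letter in E; by rewrite E.
  have Hu : P u by apply: (Hf); rewrite /= var_eqb_refl.
  have Hv : P v by apply: (Hf); rewrite /= var_eqb_refl orbT.
  have /andP[/eqP -> _] := Ha.2 u v Hu Hv. done.
  have Hu : P u by apply: (Hf); rewrite /= var_eqb_refl.
  have Hv : P v by apply: (Hf); rewrite /= var_eqb_refl orbT.
  have /andP[_ /eqP H] := Ha.2 u v Hu Hv.
  split => /eqP E; apply/eqP; [by rewrite -H | by rewrite H].
- by rewrite (IH r W W' s s' P).
- move: Hd; rewrite geq_max => /andP[H1 H2].
  rewrite (IHg r W W' s s' P) ?(IHh r W W' s s' P) // => u Hu; apply: (Hf); by rewrite Hu ?orbT.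
- move: Hd; rewrite geq_max => /andP[H1 H2].
  rewrite (IHg r W W' s s' P) ?(IHh r W W' s s' P) // => u Hu; apply: (Hf); by rewrite Hu ?orbT.
- case: r Hd Hg => // r Hd [_ /(_ v) [Hfo Hba]].
  have Hf' : forall u, free u g -> addv P v u.
    move=> u Hu; rewrite /addv; case E: (var_eqb u v) => //=; apply: Hf.
    by rewrite Hu andbT var_eqb_sym E.
  split.
  + move=> [i [Hi Hh]]; have [i' [Hi' Hg']] := Hfo i Hi.
    exists i'; split => //; by rewrite -(IH r W W' _ _ _ Hd Hf' Hg').
  + move=> [i' [Hi' Hh]]; have [i [Hi Hg']] := Hba i' Hi'.
    exists i; split => //; by rewrite (IH r W W' _ _ _ Hd Hf' Hg').
- case: r Hd Hg => // r Hd [_ /(_ v) [Hfo Hba]].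
  have Hf' : forall u, free u g -> addv P v u.
    move=> u Hu; rewrite /addv; case E: (var_eqb u v) => //=; apply: Hf.
    by rewrite Hu andbT var_eqb_sym E.
  split.
  + move=> H i' Hi'; have [i [Hi Hg']] := Hba i' Hi'.
    by rewrite -(IH r W W' _ _ _ Hd Hf' Hg'); apply: H.
  + move=> H i Hi; have [i' [Hi' Hg']] := Hfo i Hi.
    by rewrite (IH r W W' _ _ _ Hd Hf' Hg'); apply: H.
Qed.

End G.

Section G2.
Variable k : nat.
Implicit Types (W : seq 'I_k) (s : var -> nat) (P : var -> bool).

Lemma ordm_id a b : ordm a b a b. Proof. by rewrite /ordm !eqxx. Qed.

Lemma ordm_trans a b a' b' a'' b'' : ordm a b a' b' -> ordm a' b' a'' b'' -> ordm a b a'' b''.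
Proof. by rewrite /ordm => /andP[/eqP -> /eqP ->]. Qed.

Lemma geq_forget r W W' s s' P (Q : var -> bool) : geq r W W' s s' P -> (forall u, Q u -> P u) -> geq r W W' s s' Q.
Proof.
elim: r s s' P Q => [|r IH] s s' P Q /= [[A1 A2] H] HQ.
- by split=> //; split=> [u /HQ /A1|u v /HQ Hu /HQ Hv]; [|apply: A2].
- split; first by split=> [u /HQ /A1|u v /HQ Hu /HQ Hv]; [|apply: A2].
  move=> v; have [Hf Hb] := H v; split.
  + move=> i /Hf [i' [Hi' Hg]]; exists i'; split=> //; apply: IH Hg _.
    by move=> u; rewrite /addv => /orP[->|/HQ ->]; rewrite ?orbT.
  + move=> i' /Hb [i [Hi Hg]]; exists i; split=> //; apply: IH Hg _.
    by move=> u; rewrite /addv => /orP[->|/HQ ->]; rewrite ?orbT.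
Qed.

Lemma geq_lower r W W' s s' P : geq r.+1 W W' s s' P -> geq r W W' s s' P.
Proof.
elim: r s s' P => [|r IH] s s' P [A H]; first by [].
split=> // v; have [Hf Hb] := H v; split.
- by move=> i /Hf [i' [Hi' Hg]]; exists i'; split=> //; apply: IH.
- by move=> i' /Hb [i [Hi Hg]]; exists i; split=> //; apply: IH.
Qed.

Lemma geq_refl r W s P : (forall u, P u -> s u < size W) -> geq r W W s s P.
Proof.
elim: r s P => [|r IH] s P HP.
- by split=> //; split=> [u /HP|u v _ _]; [|exact: ordm_id].
- split; first by split=> [u /HP|u v _ _]; [|exact: ordm_id].
  move=> v; split.
  + move=> i Hi; exists i; split=> //; apply: IH => u.
    by rewrite /addv /upd; case: (var_eqb u v) => //= /HP.
  + move=> i Hi; exists i; split=> //; apply: IH => u.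
    by rewrite /addv /upd; case: (var_eqb u v) => //= /HP.
Qed.

Lemma geq_trans r W1 W2 W3 s1 s2 s3 P :
  geq r W1 W2 s1 s2 P -> geq r W2 W3 s2 s3 P -> geq r W1 W3 s1 s3 P.
Proof.
elim: r s1 s2 s3 P => [|r IH] s1 s2 s3 P /= [[A1 A2] H] [[B1 B2] H'].
- split=> //; split=> [u Hu|u v Hu Hv]; last exact: ordm_trans (A2 _ _ Hu Hv) (B2 _ _ Hu Hv).
  by have [? [? ->]] := A1 u Hu; have [? [? ->]] := B1 u Hu.
- split.
  + split=> [u Hu|u v Hu Hv]; last exact: ordm_trans (A2 _ _ Hu Hv) (B2 _ _ Hu Hv).
    by have [? [? ->]] := A1 u Hu; have [? [? ->]] := B1 u Hu.
  move=> v; have [Hf Hb] := H v; have [Hf' Hb'] := H' v; split.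
  + move=> i /Hf [i2 [Hi2 G1]]; have [i3 [Hi3 G2]] := Hf' i2 Hi2.
    by exists i3; split=> //; apply: IH G1 G2.
  + move=> i3 /Hb' [i2 [Hi2 G2]]; have [i [Hi G1]] := Hb i2 Hi2.
    by exists i; split=> //; apply: IH G1 G2.
Qed.

End G2.

Section G3.
Variable k : nat.
Implicit Types (W : seq 'I_k) (s sL sR : var -> nat) (P PL PR : var -> bool).

Lemma letter_cat (u v : seq 'I_k) p :
  letter (u ++ v) p = if p < size u then letter u p else letter v (p - size u).
Proof. by rewrite /letter map_cat nth_cat size_map. Qed.

Lemma ordm_lt a b a' b' : a < b -> a' < b' -> ordm a b a' b'.
Proof. by move=> H H'; rewrite /ordm H H' (ltn_eqF H) (ltn_eqF H'). Qed.

Lemma ordm_add a b a' b' c d : ordm (a + c) (b + c) (a' + d) (b' + d) = ordm a b a' b'.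
Proof. by rewrite /ordm !ltn_add2r !eqn_add2r. Qed.

Definition splitc (u u' : seq 'I_k) sL (sL' : var -> nat) PL sR (sR' : var -> nat) PR s s' P :=
  forall x, P x ->
   (s x < size u /\ s' x < size u' /\ PL x /\ sL x = s x /\ sL' x = s' x) \/
   (size u <= s x /\ size u' <= s' x /\ PR x /\ sR x + size u = s x /\ sR' x + size u' = s' x).

Lemma upd_same s v i : upd s v i v = i.
Proof. by rewrite /upd var_eqb_refl. Qed.

Lemma upd_other s v i x : ~~ var_eqb x v -> upd s v i x = s x.
Proof. by rewrite /upd => /negbTE ->. Qed.

Lemma splitc_updL (u u' : seq 'I_k) sL (sL' : var -> nat) PL sR (sR' : var -> nat) PR s s' P v i i' :
  splitc u u' sL sL' PL sR sR' PR s s' P -> i < size u -> i' < size u' ->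
  splitc u u' (upd sL v i) (upd sL' v i') (addv PL v) sR sR' (fun x => PR x && ~~ var_eqb x v)
     (upd s v i) (upd s' v i') (addv P v).
Proof.
move=> Hs Hi Hi' x; rewrite /addv /upd; case E: (var_eqb x v) => /= Hx.
- by left.
- by case: (Hs x Hx) => [[? [? [-> [-> ->]]]]|[? [? [-> [-> ->]]]]]; [left|right].
Qed.

Lemma splitc_updR (u u' : seq 'I_k) sL (sL' : var -> nat) PL sR (sR' : var -> nat) PR s s' P v i i' :
  splitc u u' sL sL' PL sR sR' PR s s' P -> size u <= i -> size u' <= i' ->
  splitc u u' sL sL' (fun x => PL x && ~~ var_eqb x v) (upd sR v (i - size u)) (upd sR' v (i' - size u')) (addv PR v)
     (upd s v i) (upd s' v i') (addv P v).
Proof.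
move=> Hs Hi Hi' x; rewrite /addv /upd; case E: (var_eqb x v) => /= Hx.
- by right; rewrite !subnK.
- by case: (Hs x Hx) => [[? [? [-> [-> ->]]]]|[? [? [-> [-> ->]]]]]; [left|right].
Qed.

Lemma geq_cat r (u u' v v' : seq 'I_k) sL (sL' : var -> nat) PL sR (sR' : var -> nat) PR s s' P :
  geq r u u' sL sL' PL -> geq r v v' sR sR' PR ->
  splitc u u' sL sL' PL sR sR' PR s s' P ->
  geq r (u ++ v) (u' ++ v') s s' P.
Proof.
elim: r sL sL' PL sR sR' PR s s' P => [|r IH] sL sL' PL sR sR' PR s s' P GL GR Hs.
- have [[A1 A2] _] := GL; have [[B1 B2] _] := GR.
  split=> //; split.
  + move=> x /Hs [[H1 [H2 [H3 [H4 H5]]]]|[H1 [H2 [H3 [H4 H5]]]]].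
    * have [C1 [C2 C3]] := A1 x H3; rewrite !size_cat !letter_cat H1 H2 -H4 -H5 C3.
      split; [lia|split; [lia|done]].
    * have [C1 [C2 C3]] := B1 x H3; rewrite !size_cat !letter_cat -H4 -H5 !ltnNge !leq_addl /= !addnK C3.
      split; [lia|split; [lia|done]].
  + move=> x y /Hs [[H1 [H2 [H3 [H4 H5]]]]|[H1 [H2 [H3 [H4 H5]]]]]
             /Hs [[G1 [G2 [G3 [G4 G5]]]]|[G1 [G2 [G3 [G4 G5]]]]].
    * by rewrite -H4 -H5 -G4 -G5; apply: A2.
    * by apply: ordm_lt; lia.
    * by apply: ordm_sym; apply: ordm_lt; lia.
    * by rewrite -H4 -H5 -G4 -G5 ordm_add; apply: B2.
- have Gat : atomic (u ++ v) (u' ++ v') s s' P.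
    by have := IH _ _ _ _ _ _ _ _ _ (geq_lower GL) (geq_lower GR) Hs; case: (r) => [[]|? []].
  split=> // w.
  have [_ /(_ w) [GLf GLb]] := GL; have [_ /(_ w) [GRf GRb]] := GR.
  have FL : forall x, PL x && ~~ var_eqb x w -> PL x by move=> x /andP[].
  have FR : forall x, PR x && ~~ var_eqb x w -> PR x by move=> x /andP[].
  split.
  + move=> i; rewrite size_cat => Hi.
    case: (ltnP i (size u)) => Hu.
    * have [i1 [Hi1 G1]] := GLf i Hu.
      exists i1; split; first by rewrite size_cat ltn_addr.
      exact: IH _ _ _ _ _ _ _ _ _ G1 (geq_forget (geq_lower GR) FR) (splitc_updL (v:=w) Hs Hu Hi1).
    * have Hv : i - size u < size v by lia.
      have [i1 [Hi1 G1]] := GRf _ Hv.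
      exists (i1 + size u'); split; first by rewrite size_cat; lia.
      have := splitc_updR (v:=w) (i:=i) (i':=i1 + size u') Hs Hu (leq_addl _ _).
      rewrite addnK => Hs'.
      exact: IH _ _ _ _ _ _ _ _ _ (geq_forget (geq_lower GL) FL) G1 Hs'.
  + move=> i'; rewrite size_cat => Hi.
    case: (ltnP i' (size u')) => Hu.
    * have [i1 [Hi1 G1]] := GLb i' Hu.
      exists i1; split; first by rewrite size_cat ltn_addr.
      exact: IH _ _ _ _ _ _ _ _ _ G1 (geq_forget (geq_lower GR) FR) (splitc_updL (v:=w) Hs Hi1 Hu).
    * have Hv : i' - size u' < size v' by lia.
      have [i1 [Hi1 G1]] := GRb _ Hv.
      exists (i1 + size u); split; first by rewrite size_cat; lia.
      have := splitc_updR (v:=w) (i:=i1 + size u) (i':=i') Hs (leq_addl _ _) Hu.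
      rewrite addnK => Hs'.
      exact: IH _ _ _ _ _ _ _ _ _ (geq_forget (geq_lower GL) FL) G1 Hs'.
Qed.

Lemma geq_cat0 r (u u' v v' : seq 'I_k) :
  geq r u u' s0 s0 none -> geq r v v' s0 s0 none -> geq r (u ++ v) (u' ++ v') s0 s0 none.
Proof. by move=> G1 G2; apply: geq_cat G1 G2 _. Qed.

End G3.

Definition dist (a b : nat) := (a - b) + (b - a).

Definition other v := match v with VX => VY | VY => VX end.

Section Del.
Variable k : nat.
Variables (n c : nat) (W W' : seq 'I_k) (lv lv' phi psi : nat -> nat).
Hypothesis Hnc : n < c.
Hypothesis Hmono : forall p q, p <= q -> lv p <= lv q.
Hypothesis Hmono' : forall p q, p <= q -> lv' p <= lv' q.
Hypothesis Hphi : forall p, p < size W -> lv p != c ->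
  phi p < size W' /\ lv' (phi p) = lv p /\ letter W' (phi p) = letter W p.
Hypothesis Hphim : forall p q, p < q -> q < size W -> lv p != c -> lv q != c -> phi p < phi q.
Hypothesis Hpsi : forall p', p' < size W' -> psi p' < size W /\ lv (psi p') != c /\ phi (psi p') = p'.
Hypothesis Hnoc : forall p', p' < size W' -> lv' p' != c.
Hypothesis Hfull : forall (t p : nat), t != c -> dist t c <= n -> p < size W ->
  (exists q, q < size W' /\ lv' q = t /\ letter W' q = letter W p) /\
  (exists q, q < size W /\ lv q = t /\ letter W q = letter W p).

Definition status r p p' :=
  ((lv p != c) && (p' == phi p)) || ((dist (lv p) c <= n - r) && (dist (lv' p') c <= n - r)).

Definition Inv r s s' P := atomic W W' s s' P /\ forall u, P u -> status r (s u) (s' u).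

Lemma status_mono r p p' : status r.+1 p p' -> status r p p'.
Proof.
rewrite /status => /orP[->//|/andP[H1 H2]]; apply/orP; right; apply/andP; split; lia.
Qed.

Lemma lt_of_lv p q : lv p < lv q -> p < q.
Proof. move=> H; rewrite ltnNge; apply/negP => /Hmono; lia. Qed.

Lemma lt_of_lv' p q : lv' p < lv' q -> p < q.
Proof. move=> H; rewrite ltnNge; apply/negP => /Hmono'; lia. Qed.

Lemma phi_ordm p q : p < size W -> q < size W -> lv p != c -> lv q != c -> ordm p q (phi p) (phi q).
Proof.
move=> Hp Hq Hcp Hcq; case: (ltngtP p q) => [H|H|->]; last exact: ordm_refl.
- by apply: ordm_lt => //; apply: Hphim.
- by apply: ordm_sym; apply: ordm_lt => //; apply: Hphim.
Qed.

Lemma upd_oth s v i : upd s v i (other v) = s (other v).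
Proof. by case: v. Qed.

Lemma var_cases u v : u = v \/ u = other v.
Proof. by case: u; case: v; auto. Qed.

Lemma inv_ext r s s' P v i i' : Inv r.+1 s s' P -> i < size W -> i' < size W' ->
  letter W i = letter W' i' ->
  (P (other v) -> ordm i (s (other v)) i' (s' (other v))) -> status r i i' ->
  Inv r (upd s v i) (upd s' v i') (addv P v).
Proof.
move=> [[A1 A2] St] Hi Hi' Hl Ho Hs.
have Av : addv P v v by rewrite /addv var_eqb_refl.
have Ao : addv P v (other v) = P (other v) by rewrite /addv; case: v {Av Ho}.
split; first split.
- move=> u; case: (var_cases u v) => ->; first by rewrite !upd_same.
  by rewrite Ao !upd_oth => /A1.
- move=> u w; case: (var_cases u v) => ->; case: (var_cases w v) => ->;
    rewrite ?Ao ?upd_same ?upd_oth.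
  + by move=> _ _; exact: ordm_refl.
  + by move=> _ /Ho.
  + by move=> /Ho H _; apply: ordm_sym.
  + exact: A2.
- move=> u; case: (var_cases u v) => ->; first by rewrite !upd_same.
  by rewrite Ao !upd_oth => /St /status_mono.
Qed.

Lemma pick_below' r j p : r < n -> 0 < minn j c -> c - minn j c <= n - r.+1 -> p < size W ->
  exists q, q < size W' /\ lv' q < j /\ letter W' q = letter W p /\ dist (lv' q) c <= n - r.
Proof.
move=> Hr H1 H2 Hp.
have [[q [Hq [Hlq Hlet]]] _] := Hfull (t := (minn j c).-1) (p := p) ltac:(apply/eqP; lia) ltac:(rewrite /dist; lia) Hp.
exists q; rewrite Hlq /dist; split=> //; split; [lia|split=> //; lia].
Qed.

Lemma pick_above' r j p : r < n -> maxn j c - c <= n - r.+1 -> p < size W ->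
  exists q, q < size W' /\ j < lv' q /\ letter W' q = letter W p /\ dist (lv' q) c <= n - r.
Proof.
move=> Hr H2 Hp.
have [[q [Hq [Hlq Hlet]]] _] := Hfull (t := (maxn j c).+1) (p := p) ltac:(apply/eqP; lia) ltac:(rewrite /dist; lia) Hp.
exists q; rewrite Hlq /dist; split=> //; split; [lia|split=> //; lia].
Qed.

Lemma pick_below r j p : r < n -> 0 < minn j c -> c - minn j c <= n - r.+1 -> p < size W ->
  exists q, q < size W /\ lv q < j /\ letter W q = letter W p /\ dist (lv q) c <= n - r.
Proof.
move=> Hr H1 H2 Hp.
have [_ [q [Hq [Hlq Hlet]]]] := Hfull (t := (minn j c).-1) (p := p) ltac:(apply/eqP; lia) ltac:(rewrite /dist; lia) Hp.
exists q; rewrite Hlq /dist; split=> //; split; [lia|split=> //; lia].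
Qed.

Lemma pick_above r j p : r < n -> maxn j c - c <= n - r.+1 -> p < size W ->
  exists q, q < size W /\ j < lv q /\ letter W q = letter W p /\ dist (lv q) c <= n - r.
Proof.
move=> Hr H2 Hp.
have [_ [q [Hq [Hlq Hlet]]]] := Hfull (t := (maxn j c).+1) (p := p) ltac:(apply/eqP; lia) ltac:(rewrite /dist; lia) Hp.
exists q; rewrite Hlq /dist; split=> //; split; [lia|split=> //; lia].
Qed.


Lemma forth r s s' P v i : r < n -> Inv r.+1 s s' P -> i < size W ->
  exists i', i' < size W' /\ Inv r (upd s v i) (upd s' v i') (addv P v).
Proof.
move=> Hr HI Hi; have [[A1 A2] St] := HI.
case: (boolP ((lv i != c) && (P (other v) ==> ordm i (s (other v)) (phi i) (s' (other v))))) => [/andP[Hc Ho]|Hno].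
- have [Hpi [Hlv Hlet]] := Hphi Hi Hc.
  exists (phi i); split=> //; apply: (inv_ext HI Hi Hpi).
  + by rewrite Hlet.
  + by move=> Po; move: Ho; rewrite Po.
  + by rewrite /status Hc eqxx.
- have Hd : dist (lv i) c <= n - r.
    case: (eqVneq (lv i) c) => [->|Hc]; first by rewrite /dist subnn.
    move: Hno; rewrite Hc /=; case Po: (P (other v)) => //= Hno.
    have [Ha [Ha' _]] := A1 _ Po.
    move: (St _ Po); rewrite /status => /orP[/andP[Hca /eqP Ea]|/andP[Da Da']].
    + by move: Hno; rewrite Ea phi_ordm.
    + rewrite leqNgt; apply/negP => Hgt.
      have [_ [Hl _]] := Hphi Hi Hc.
      have [Hhi|Hlo] : c + (n - r) < lv i \/ lv i + (n - r) < c by rewrite /dist in Hgt; lia.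
      * have Hai : s (other v) < i by apply: lt_of_lv; rewrite /dist in Da; lia.
        have Hai' : s' (other v) < phi i by apply: lt_of_lv'; rewrite Hl; rewrite /dist in Da'; lia.
        by rewrite (ordm_sym (ordm_lt Hai Hai')) in Hno.
      * have Hai : i < s (other v) by apply: lt_of_lv; rewrite /dist in Da; lia.
        have Hai' : phi i < s' (other v) by apply: lt_of_lv'; rewrite Hl; rewrite /dist in Da'; lia.
        by rewrite (ordm_lt Hai Hai') in Hno.
  case Po: (P (other v)).
  + have [Ha [Ha' Hla]] := A1 _ Po.
    case: (ltngtP i (s (other v))) => [Hlt|Hgt|Heq].
    * have [H1 H2] : 0 < minn (lv' (s' (other v))) c /\ c - minn (lv' (s' (other v))) c <= n - r.+1.
        move: (St _ Po); rewrite /status => /orP[/andP[Hca /eqP Ea]|/andP[Da Da']].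
        - have Hlc : lv i = c.
            apply/eqP; apply: contraNT Hno => Hc; rewrite Hc /= Po /= Ea; exact: phi_ordm.
          have [_ [Hl _]] := Hphi Ha Hca.
          have := Hmono (ltnW Hlt); move/eqP: Hca; rewrite Ea Hl; lia.
        - rewrite /dist in Da'; lia.
      have [q [Hq [Hlq [Hlet Hdq]]]] := pick_below' Hr H1 H2 Hi.
      exists q; split=> //; apply: (inv_ext HI Hi Hq).
      - by rewrite Hlet.
      - by move=> _; apply: ordm_lt => //; exact: lt_of_lv' Hlq.
      - by rewrite /status Hd Hdq orbT.
    * have H2 : maxn (lv' (s' (other v))) c - c <= n - r.+1.
        move: (St _ Po); rewrite /status => /orP[/andP[Hca /eqP Ea]|/andP[Da Da']].
        - have Hlc : lv i = c.
            apply/eqP; apply: contraNT Hno => Hc; rewrite Hc /= Po /= Ea; exact: phi_ordm.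
          have [_ [Hl _]] := Hphi Ha Hca.
          have := Hmono (ltnW Hgt); move/eqP: Hca; rewrite Ea Hl; lia.
        - rewrite /dist in Da'; lia.
      have [q [Hq [Hlq [Hlet Hdq]]]] := pick_above' Hr H2 Hi.
      exists q; split=> //; apply: (inv_ext HI Hi Hq).
      - by rewrite Hlet.
      - by move=> _; apply: ordm_sym; apply: ordm_lt => //; exact: lt_of_lv' Hlq.
      - by rewrite /status Hd Hdq orbT.
    * exists (s' (other v)); split=> //; apply: (inv_ext HI Hi Ha'); rewrite ?Heq //.
      - by move=> _; exact: ordm_refl.
      - by apply: status_mono; apply: St.
  + have H1 : 0 < minn c c by rewrite minnn; lia.
    have H2 : c - minn c c <= n - r.+1 by rewrite minnn subnn.
    have [q [Hq [Hlq [Hlet Hdq]]]] := pick_below' Hr H1 H2 Hi.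
    exists q; split=> //; apply: (inv_ext HI Hi Hq).
    - by rewrite Hlet.
    - by rewrite Po.
    - by rewrite /status Hd Hdq orbT.
Qed.

Lemma back r s s' P v i' : r < n -> Inv r.+1 s s' P -> i' < size W' ->
  exists i, i < size W /\ Inv r (upd s v i) (upd s' v i') (addv P v).
Proof.
move=> Hr HI Hi'; have [[A1 A2] St] := HI.
have [Hp [Hpc Hpp]] := Hpsi Hi'.
have [_ [Hlp Hletp]] := Hphi Hp Hpc; rewrite Hpp in Hlp Hletp.
case: (boolP (P (other v) ==> ordm (psi i') (s (other v)) i' (s' (other v)))) => [Ho|Hno].
- exists (psi i'); split=> //; apply: (inv_ext HI Hp Hi').
  + by rewrite Hletp.
  + by move=> Po; move: Ho; rewrite Po.
  + by rewrite /status Hpc Hpp eqxx.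
- case Po: (P (other v)); last by rewrite Po in Hno.
  rewrite Po /= in Hno.
  have [Ha [Ha' Hla]] := A1 _ Po.
  move: (St _ Po); rewrite /status => /orP[/andP[Hca /eqP Ea]|/andP[Da Da']].
    by move: Hno; rewrite Ea -{2}Hpp phi_ordm.
  have Hd : dist (lv' i') c <= n - r.
    rewrite leqNgt; apply/negP => Hgt.
    have [Hhi|Hlo] : c + (n - r) < lv' i' \/ lv' i' + (n - r) < c by rewrite /dist in Hgt; lia.
    * have Hai : s (other v) < psi i' by apply: lt_of_lv; rewrite -Hlp; rewrite /dist in Da; lia.
      have Hai' : s' (other v) < i' by apply: lt_of_lv'; rewrite /dist in Da'; lia.
      by rewrite (ordm_sym (ordm_lt Hai Hai')) in Hno.
    * have Hai : psi i' < s (other v) by apply: lt_of_lv; rewrite -Hlp; rewrite /dist in Da; lia.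
      have Hai' : i' < s' (other v) by apply: lt_of_lv'; rewrite /dist in Da'; lia.
      by rewrite (ordm_lt Hai Hai') in Hno.
  case: (ltngtP i' (s' (other v))) => [Hlt|Hgt|Heq].
  + have H1 : 0 < minn (lv (s (other v))) c by rewrite /dist in Da; lia.
    have H2 : c - minn (lv (s (other v))) c <= n - r.+1 by rewrite /dist in Da; lia.
    have [q [Hq [Hlq [Hlet Hdq]]]] := pick_below Hr H1 H2 Hp.
    exists q; split=> //; apply: (inv_ext HI Hq Hi').
    * by rewrite Hlet Hletp.
    * by move=> _; apply: ordm_lt => //; exact: lt_of_lv Hlq.
    * by rewrite /status Hd Hdq orbT.
  + have H2 : maxn (lv (s (other v))) c - c <= n - r.+1 by rewrite /dist in Da; lia.
    have [q [Hq [Hlq [Hlet Hdq]]]] := pick_above Hr H2 Hp.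
    exists q; split=> //; apply: (inv_ext HI Hq Hi').
    * by rewrite Hlet Hletp.
    * by move=> _; apply: ordm_sym; apply: ordm_lt => //; exact: lt_of_lv Hlq.
    * by rewrite /status Hd Hdq orbT.
  + exists (s (other v)); split=> //; apply: (inv_ext HI Ha Hi'); rewrite ?Heq //.
    * by move=> _; exact: ordm_refl.
    * by apply: status_mono; apply: St.
Qed.

Lemma inv_geq r : r <= n -> forall s s' P, Inv r s s' P -> geq r W W' s s' P.
Proof.
elim: r => [|r IH] Hr s s' P HI; first by split=> //; case: HI.
split; first by case: HI.
move=> v; split.
- move=> i Hi; have [i' [Hi' HI']] := forth v Hr HI Hi.
  by exists i'; split=> //; apply: IH => //; apply: ltnW.
- move=> i' Hi'; have [i [Hi HI']] := back v Hr HI Hi'.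
  by exists i; split=> //; apply: IH => //; apply: ltnW.
Qed.

Lemma deletion_abs : geq n W W' s0 s0 none.
Proof.
apply: inv_geq; first by [].
split; first by split.
by [].
Qed.

End Del.

Section Lev.
Variable k : nat.

Fixpoint lev (L : seq (seq 'I_k)) (p : nat) : nat :=
  match L with [::] => 0 | b :: L' => if p < size b then 0 else (lev L' (p - size b)).+1 end.

Lemma lev_mono L p q : p <= q -> lev L p <= lev L q.
Proof.
elim: L p q => [|b L IH] p q Hpq //=.
case: (ltnP q (size b)) => Hq; first by rewrite (leq_ltn_trans Hpq Hq).
case: (ltnP p (size b)) => Hp //.
by rewrite ltnS; apply: IH; apply: leq_sub2r.
Qed.

Lemma lev_lt L p : p < size (flatten L) -> lev L p < size L.
Proof.
elim: L p => [|b L IH] p //=; rewrite size_cat => Hp.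
case: (ltnP p (size b)) => Hb //.
rewrite ltnS; apply: IH; lia.
Qed.

Lemma lev_exists L t (l : 'I_k) : t < size L -> l \in nth [::] L t ->
  exists p, p < size (flatten L) /\ lev L p = t /\ letter (flatten L) p = Some l.
Proof.
elim: L t => [|b L IH] t //= Ht.
case: t Ht => [|t] Ht Hl /=.
- have Hi : index l b < size b by rewrite index_mem.
  exists (index l b); split; first by rewrite size_cat ltn_addr.
  rewrite Hi; split=> //; rewrite letter_cat Hi /letter (nth_map l) // nth_index //.
- have [p [Hp [Hlev Hlet]]] := IH t Ht Hl.
  exists (size b + p); rewrite size_cat ltn_add2l; split=> //.
  rewrite ltnNge leq_addr /= addKn Hlev letter_cat ltnNge leq_addr /= addKn Hlet.
  by [].
Qed.

Lemma letter_some (w : seq 'I_k) p : p < size w -> exists l, l \in w /\ letter w p = Some l.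
Proof.
elim: w p => [|a w IH] [|p] //= Hp.
- by exists a; rewrite mem_head.
- have [l [Hl Hlet]] := IH p Hp; exists l; split; first by rewrite in_cons Hl orbT.
  by [].
Qed.

End Lev.

Ltac lia2 := repeat match goal with H := _ |- _ => clearbody H end; lia.

Section Conc.
Variable k : nat.

Lemma deletion n (EL : seq (seq 'I_k)) (z : seq 'I_k) ER :
  size EL = n.+1 -> n <= size ER ->
  (forall t l, 0 < t <= n -> l \in flatten EL ++ z ++ flatten ER -> l \in nth [::] EL t) ->
  (forall t l, t < n -> l \in flatten EL ++ z ++ flatten ER -> l \in nth [::] ER t) ->
  geq n (flatten EL ++ z ++ flatten ER) (flatten EL ++ flatten ER) s0 s0 none.
Proof.
move=> HEL HER HbL HbR.
set A := flatten EL; set C := flatten ER.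
have HA : forall p, p < size A -> lev EL p < n.+1 by move=> p Hp; rewrite -HEL; apply: lev_lt.
pose lv p := if p < size A then lev EL p else if p < size A + size z then n.+1
             else n.+2 + lev ER (p - size A - size z).
pose lv' p := if p < size A then lev EL p else n.+2 + lev ER (p - size A).
pose phi p := if p < size A then p else p - size z.
pose psi p := if p < size A then p else p + size z.
apply: (@deletion_abs k n n.+1 _ _ lv lv' phi psi).
- by [].
- move=> p q Hpq; rewrite /lv.
  case: (ltnP q (size A)) => Hq.
  + by rewrite (leq_ltn_trans Hpq Hq); apply: lev_mono.
  case: (ltnP p (size A)) => Hp; first by have := HA p Hp; case: ifP => _; lia2.
  case: (ltnP q (size A + size z)) => Hq2; first by rewrite (leq_ltn_trans Hpq Hq2).
  case: (ltnP p (size A + size z)) => Hp2; first by lia2.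
  rewrite leq_add2l; apply: lev_mono; lia2.
- move=> p q Hpq; rewrite /lv'.
  case: (ltnP q (size A)) => Hq.
  + by rewrite (leq_ltn_trans Hpq Hq); apply: lev_mono.
  case: (ltnP p (size A)) => Hp; first by have := HA p Hp; lia2.
  rewrite leq_add2l; apply: lev_mono; lia2.
- move=> p; rewrite !size_cat => Hp; rewrite /lv /phi.
  case: (ltnP p (size A)) => H1.
  + by rewrite ?size_cat /lv' H1 !letter_cat H1 ltn_addr.
  case: (ltnP p (size A + size z)) => H2; first by rewrite eqxx.
  move=> _.
  have E : p - size z - size A = p - size A - size z by rewrite subnAC.
  rewrite ?size_cat /lv' ifF; last by apply/negbTE; rewrite -leqNgt; lia2.
  rewrite E !letter_cat ifF; last by apply/negbTE; rewrite -leqNgt; lia2.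
  rewrite E ifF; last by apply/negbTE; rewrite -leqNgt; lia2.
  rewrite ifF; last by apply/negbTE; rewrite -leqNgt; lia2.
  split; first by lia2.
  by [].
- move=> p q Hpq; rewrite !size_cat /lv /phi => Hq.
  case: (ltnP p (size A)) => H1; case: (ltnP q (size A)) => H2 //; try lia2.
  + case: (ltnP q (size A + size z)) => H3; last by lia2.
    by rewrite eqxx.
  + case: (ltnP p (size A + size z)) => H3; first by rewrite eqxx.
    case: (ltnP q (size A + size z)) => H4; first by lia2.
    lia2.
- move=> p'; rewrite size_cat => Hp'; rewrite /psi /lv /phi.
  case: (ltnP p' (size A)) => H1.
  + rewrite !size_cat H1; split; first by lia2.
    by have := HA p' H1; lia2.
  + rewrite !size_cat ifF; last by apply/negbTE; rewrite -leqNgt; lia2.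
    rewrite ifF; last by apply/negbTE; rewrite -leqNgt; lia2.
    rewrite ifF; last by apply/negbTE; rewrite -leqNgt; lia2.
    split; first by lia2.
    split; [lia2 | by rewrite addnK].
- move=> t p Htc Htd Hp.
  have [l [Hl Hlet]] := letter_some Hp; rewrite Hlet.
  case: (ltnP t n.+1) => Ht.
  + have Ht0 : 0 < t <= n by move/eqP: Htc; rewrite /dist in Htd; lia2.
    have [q [Hq [Hlq Hletq]]] := lev_exists (L:=EL) (t:=t) (l:=l) ltac:(rewrite HEL; lia2) (HbL t l Ht0 Hl).
    rewrite -/A in Hq Hletq.
    split; exists q; rewrite /lv /lv' Hq.
    * by rewrite size_cat letter_cat Hq Hletq ltn_addr.
    * by rewrite !size_cat letter_cat Hq Hletq ltn_addr.
  + have Ht0 : t - n.+2 < n by move/eqP: Htc; rewrite /dist in Htd; lia2.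
    have [q [Hq [Hlq Hletq]]] := lev_exists (L:=ER) (t:=t - n.+2) (l:=l) (leq_trans Ht0 HER) (HbR _ l Ht0 Hl).
    rewrite -/C in Hq Hletq.
    split.
    * exists (size A + q).
      have E1 : (size A + q < size A) = false by rewrite ltnNge leq_addr.
      rewrite /lv' size_cat E1 addKn Hlq letter_cat E1 addKn Hletq ltn_add2l.
      split=> //; split=> //; move/eqP: Htc; lia2.
    * exists (size A + size z + q).
      have E1 : (size A + size z + q < size A) = false by rewrite ltnNge -addnA leq_addr.
      have E2 : (size A + size z + q < size A + size z) = false by rewrite ltnNge leq_addr.
      have E3 : size A + size z + q - size A - size z = q by rewrite -addnA addKn addKn.
      have E4 : (size A + size z + q - size A < size z) = false by rewrite -addnA addKn ltnNge leq_addr.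
      have E5 : size A + size z + q - size A - size z = q by rewrite -addnA addKn addKn.
      rewrite /lv !size_cat E1 E2 E3 Hlq !letter_cat E1 E4 E5 Hletq addnA ltn_add2l.
      split=> //; split=> //; move/eqP: Htc; lia2.
Qed.

End Conc.

Section Main.
Variable k : nat.

Definition nd (w : seq 'I_k) := #|[set a | a \in w]|.
Definition full (B u : seq 'I_k) := all (fun a => a \in u) B.

Lemma nd_lt (u w : seq 'I_k) : {subset u <= w} -> ~~ full w u -> nd u < nd w.
Proof.
move=> Hs Hf; apply: proper_card; rewrite properE; apply/andP; split.
- by apply/subsetP => x; rewrite !inE; apply: Hs.
- apply: contra Hf => /subsetP H; apply/allP => x Hx.
  by have := H x; rewrite !inE; apply.
Qed.

Lemma nd0 (w : seq 'I_k) : nd w = 0 -> w = [::].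
Proof.
case: w => [//|a w]; rewrite /nd (cardD1 a) inE mem_head //.
Qed.

Lemma decomp (B : seq 'I_k) : B != [::] -> forall v p, ~~ full B p ->
  exists bs r, p ++ v = flatten bs ++ r /\
   (forall b, b \in bs -> full B b /\ exists u a, b = rcons u a /\ ~~ full B u /\ {subset u <= p ++ v}) /\
   ~~ full B r /\ {subset r <= p ++ v}.
Proof.
move=> HB v; elim: v => [|x v IH] p Hp.
- by exists [::], p; rewrite cats0; split=> //; split=> //; split=> // y.
- case: (boolP (full B (rcons p x))) => Hf.
  + have H0 : ~~ full B [::] by move: HB; rewrite /full; case: (B).
    have [bs [r [E [Hb [Hr Hrs]]]]] := IH [::] H0.
    rewrite /= in E Hb Hrs.
    exists (rcons p x :: bs), r; split; first by rewrite -cat_rcons /= E catA.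
    split; last first.
      split=> // y /Hrs Hy; by rewrite mem_cat /= in_cons Hy !orbT.
    move=> b; rewrite in_cons => /orP[/eqP ->|/Hb [Hfb [u [a' [Eb [Hu Hus]]]]]].
    * split=> //; exists p, x; split=> //; split=> // y Hy.
      by rewrite mem_cat Hy.
    * split=> //; exists u, a'; split=> //; split=> // y /Hus Hy.
      by rewrite mem_cat /= in_cons Hy !orbT.
  + have [bs [r [E [Hb [Hr Hrs]]]]] := IH (rcons p x) Hf.
    by exists bs, r; rewrite -cat_rcons.
Qed.

Fixpoint Cc j := match j with 0 => 0 | j'.+1 => 3 * (Cc j' + 1) end.

Lemma shrink_list n j :
  (forall w : seq 'I_k, nd w <= j -> exists w', size w' <= Cc j * n ^ j /\ geq n w w' s0 s0 none) ->
  forall bs : seq (seq 'I_k), (forall b, b \in bs -> exists u a, b = rcons u a /\ nd u <= j) ->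
  exists w2, size w2 <= size bs * (Cc j * n ^ j + 1) /\ geq n (flatten bs) w2 s0 s0 none.
Proof.
move=> IH; elim=> [|b bs IHb] Hb.
- by exists [::]; split=> //; apply: geq_refl.
- have [u [a [Eb Hu]]] := Hb b (mem_head _ _).
  have [w2 [Hs2 G2]] := IHb (fun b' Hb' => Hb b' (mem_behead (s:=b :: bs) Hb')).
  have [u' [Hsu Gu]] := IH u Hu.
  exists (u' ++ [:: a] ++ w2); split.
  + rewrite !size_cat /=; rewrite mulSn; lia.
  + rewrite /= Eb -cats1 -catA; apply: (geq_cat0 Gu).
    change (a :: w2) with ([:: a] ++ w2); apply: geq_cat0 G2.
    exact: geq_refl.
Qed.

Lemma shrink j : forall n, 0 < n -> forall w : seq 'I_k, nd w <= j ->
  exists w', size w' <= Cc j * n ^ j /\ geq n w w' s0 s0 none.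
Proof.
elim: j => [|j IHj] n Hn w Hw.
- rewrite leqn0 in Hw; rewrite (nd0 (eqP Hw)).
  by exists [::]; split=> //; apply: geq_refl.
- case: (eqVneq w [::]) => [->|Hne].
    by exists [::]; split=> //; apply: geq_refl.
  have H0 : ~~ full w [::] by case: (w) Hne.
  have [bs [r [E [Hb [Hr Hrs]]]]] := decomp Hne w H0.
  rewrite /= in E Hb Hrs.
  have Hblk : forall b, b \in bs -> exists u a, b = rcons u a /\ nd u <= j.
    move=> b /Hb [_ [u [a [Eb [Hu Hus]]]]]; exists u, a; split=> //.
    by have := nd_lt Hus Hu; lia.
  have Hndr : nd r <= j by have := nd_lt Hrs Hr; lia.
  have [bs2 [Hsz [Hsub G1]]] : exists bs2, size bs2 <= n + n /\ {subset bs2 <= bs} /\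
      geq n w (flatten bs2 ++ r) s0 s0 none.
    case: (leqP (size bs) (n + n)) => Hm.
    + exists bs; split=> //; split=> //; rewrite -E; exact: geq_refl.
    +       pose EL := [::] :: take n bs.
      pose z := flatten (drop n (take (size bs - n) bs)).
      pose ER := drop (size bs - n) bs ++ [:: r].
      have Ew : w = flatten EL ++ z ++ flatten ER.
        rewrite E /EL /z /ER /= flatten_cat /= cats0 !catA.
        congr (_ ++ _).
        rewrite -(take_takel (i:=n) (j:=size bs - n)); last by lia2.
        by rewrite -flatten_cat cat_take_drop -flatten_cat cat_take_drop.
      exists (take n bs ++ drop (size bs - n) bs); split.
        rewrite size_cat size_take size_drop; case: (ltnP n (size bs)) => Hnb.
          by rewrite subKn ?(ltnW Hnb).
        by have := leq_trans Hm Hnb; lia.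
      split.
        by move=> b; rewrite mem_cat => /orP[/mem_take|/mem_drop].
      have Hfull : forall b l, b \in bs -> l \in w -> l \in b.
        by move=> b l /Hb [/allP Hf _] /Hf.
      rewrite {1}Ew.
      have -> : flatten (take n bs ++ drop (size bs - n) bs) ++ r = flatten EL ++ flatten ER.
        by rewrite /EL /ER /= !flatten_cat /= cats0 catA.
      apply: deletion.
      * by rewrite /EL /= size_take; case: (ltnP n (size bs)) => ?; lia2.
      * by rewrite /ER size_cat size_drop /=; lia2.
      * move=> [|t] l Ht Hl //; rewrite -Ew in Hl.
        rewrite /EL /=; apply: Hfull Hl; apply: mem_take.
        by apply: mem_nth; rewrite size_take; case: (ltnP n (size bs)) => ?; lia2.
      * move=> t l Ht Hl; rewrite -Ew in Hl.
        rewrite /ER nth_cat size_drop ifT; last by lia2.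
        apply: Hfull Hl; apply: mem_drop.
        apply: mem_nth; rewrite size_drop subKn //.
        by apply: ltnW; apply: leq_ltn_trans Hm; apply: leq_addl.
  have [w2 [Hs2 G2]] := shrink_list (IHj n Hn) (fun b Hb2 => Hblk b (Hsub b Hb2)).
  have [r' [Hsr Gr]] := IHj n Hn r Hndr.
  exists (w2 ++ r'); split.
  + rewrite size_cat /= expnS.
    have HN : 0 < n ^ j by rewrite expn_gt0 Hn.
    move: Hs2 Hsr Hsz HN Hn; set N := n ^ j; set C := Cc j; move=> Hs2 Hsr Hsz HN Hn'.
    clearbody N C.
    have H1 : size bs2 * (C * N + 1) <= (n + n) * (C * N + 1) by apply: leq_mul.
    have H2 : n <= n * N by rewrite -{1}(muln1 n) leq_mul2l HN orbT.
    have H3 : C * N <= n * (C * N) by rewrite -{1}(mul1n (C * N)) leq_mul2r Hn' orbT.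
    have H5 := leq_add (leq_trans Hs2 H1) Hsr.
    apply: leq_trans H5 _.
    clear -H2 H3 HN Hn'; nia.
  + apply: geq_trans G1 _; exact: geq_cat0.
Qed.

End Main.

Theorem theorem6p2 :
  forall k : nat, 1 <= k ->
  exists c : nat, forall n : nat, 1 <= n ->
    forall phi : fo2 k, sentence phi -> qdepth phi <= n ->
      (exists w : seq 'I_k, models w phi) ->
      exists w : seq 'I_k, size w <= c * n ^ k /\ models w phi.
Proof.
move=> k _; exists (Cc k) => n Hn phi [HX HY] Hd [w Hw].
have Hk : nd w <= k by rewrite /nd; apply: leq_trans (max_card _) _; rewrite card_ord.
have [w' [Hs G]] := shrink Hn Hk.
exists w'; split=> //.
rewrite /models -(soundness Hd _ G) //.
by move=> [] Hf; [rewrite Hf in HX | rewrite Hf in HY].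
Qed.
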